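(* (1) For every $k\geq 1$, every orderable $k$-hypergraph is separable. (2) For $k=1,2$, every separable $k$-hypergraph is orderable; but for each $k\geq 3$ there exists a separable $k$-hypergraph that is not orderable.
   Context: A $k$-hypergraph on a finite set $V$ is a set $\mathcal{H}$ of $k$-element subsets of $V$. Let $n=|V|$. $\mathcal{H}$ is orderable if there is an ordering $v_1,\dots,v_n$ of $V$ such that each $v_i$ is either dominating, meaning $E\in\mathcal{H}$ for every $k$-set $E$ with $v_i\in E\subseteq\{v_1,\dots,v_i\}$, or isolating, meaning $E\notin\mathcal{H}$ for every $k$-set $E$ with $v_i\in E\subseteq\{v_1,\dots,v_i\}$. $\mathcal{H}$ is separable if there is a labeling $a:V\to\mathbb{Z}$ such that $\mathcal{H}=\{E\subseteq V:|E|=k,\ \sum_{v\in E}a(v)\geq 0\}$. *)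

(* Defs.v *)
From HB Require Import structures.
From mathcomp Require Import all_boot all_order all_algebra.
Set Implicit Arguments. Unset Strict Implicit. Unset Printing Implicit Defensive.
Import Order.TTheory GRing.Theory Num.Theory.

Definition is_hypergraph (V : finType) (k : nat) (H : {set {set V}}) : Prop :=
  forall E, E \in H -> #|E| = k.

(* v is dominating w.r.t. the prefix P (= {v_1,...,v_i}, with v = v_i). *)
Definition dominating (V : finType) (k : nat) (H : {set {set V}})
    (P : seq V) (v : V) : Prop :=
  forall E : {set V}, #|E| = k -> v \in E -> {subset E <= P} -> E \in H.

Definition isolating (V : finType) (k : nat) (H : {set {set V}})
    (P : seq V) (v : V) : Prop :=
  forall E : {set V}, #|E| = k -> v \in E -> {subset E <= P} -> E \notin H.

Definition orderable (V : finType) (k : nat) (H : {set {set V}}) : Prop :=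
  exists s : seq V, [/\ uniq s, (forall v, v \in s) &
    forall s1 v s2, s = s1 ++ v :: s2 ->
      dominating k H (rcons s1 v) v \/ isolating k H (rcons s1 v) v].

Definition separable (V : finType) (k : nat) (H : {set {set V}}) : Prop :=
  exists a : V -> int,
    H = [set E : {set V} | (#|E| == k) && (0 <= \sum_(v in E) a v)%R].

(* Main.v *)
Require Import Defs.
From mathcomp Require Import all_boot all_order all_algebra.
From mathcomp Require Import zify ring lra.
Import Order.TTheory GRing.Theory Num.Theory.

Lemma sum_pow2_lt (T : finType) (f : T -> nat) m : forall (A : {set T}),
  {in A &, injective f} -> (forall x, x \in A -> f x < m) ->
  \sum_(x in A) 2 ^ (f x) < 2 ^ m.
Proof.
elim: m => [|m IH] A inj lt.
  rewrite big_pred0 // => x; apply/negP => /lt; done.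
case: (pickP [pred x in A | f x == m]) => [x /andP [xA /eqP fx]|none].
  rewrite (big_setD1 x) //= fx expnS.
  have : \sum_(i in A :\ x) 2 ^ f i < 2 ^ m.
    apply: IH.
      by move=> y z /setD1P [_ yA] /setD1P [_ zA]; apply: inj.
    move=> y /setD1P [yx yA]; have := lt _ yA; rewrite ltnS leq_eqVlt.
    case/orP => // /eqP fy; case/negP: yx; apply/eqP/inj => //; congruence.
  lia.
have : \sum_(x in A) 2 ^ f x < 2 ^ m.
  apply: IH => // y yA; have := lt _ yA; rewrite ltnS leq_eqVlt.
  by case/orP => // /eqP fy; have := none y; rewrite /= yA fy eqxx.
rewrite expnS; lia.
Qed.

Lemma part1 (V : finType) (k : nat) (H : {set {set V}}) :
  1 <= k -> is_hypergraph k H -> orderable k H -> separable k H.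
Proof.
move=> hk hH [s [Us Alls Hs]].
pose idx v := index v s.
pose b v := [forall E : {set V}, ((#|E| == k) && (v \in E) &&
   [forall x in E, x \in take (idx v).+1 s]) ==> (E \in H)].
pose a v : int := if b v then Posz (2 ^ idx v) else (- Posz (2 ^ idx v))%R.
exists a; apply/setP => E; rewrite inE.
case: (boolP (#|E| == k)) => hE /=; last first.
  by apply/negP => /hH /eqP; rewrite (negbTE hE).
have E0 : 0 < #|E| by rewrite (eqP hE).
have [v vE vmax] := eq_bigmax_cond idx E0.
set m := idx v in vmax.
have lem : forall x, x \in E -> idx x <= m.
  by move=> x xE; rewrite -vmax; apply: leq_bigmax_cond.
have vs : m < size s by rewrite /m /idx index_mem.
have sub : forall x, x \in E -> x \in take m.+1 s.
  by move=> x xE; rewrite in_take // ltnS lem.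
have sdec : s = take m s ++ v :: drop m.+1 s.
  by rewrite -{1}(cat_take_drop m s) (drop_nth v vs) nth_index.
have pref : rcons (take m s) v = take m.+1 s.
  by rewrite (take_nth v vs) nth_index.
have Hv := Hs _ _ _ sdec; rewrite pref in Hv.
have injE : {in E :\ v &, injective idx}.
  move=> x y /setD1P [_ xE] /setD1P [_ yE] e.
  by rewrite -(nth_index v (Alls x)) -/(idx x) e nth_index.
have ltE : forall x, x \in E :\ v -> idx x < m.
  move=> x /setD1P [xv xE]; rewrite ltn_neqAle lem // andbT.
  apply/negP => /eqP e; case/negP: xv; apply/eqP.
  by rewrite -(nth_index v (Alls x)) -/(idx x) e nth_index.
have bnd := @sum_pow2_lt _ idx m (E :\ v) injE ltE.
set S := \sum_(x in E :\ v) 2 ^ idx x in bnd.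
have SE : Posz S = (\sum_(x in E :\ v) Posz (2 ^ idx x))%R.
  by rewrite /S; apply: (big_morph Posz PoszD).
have up : (\sum_(x in E :\ v) a x <= Posz S)%R.
  rewrite SE; apply: ler_sum => x _.
  by rewrite /a; case: (b x) => //; lia.
have lo : (- (Posz S) <= \sum_(x in E :\ v) a x)%R.
  rewrite SE -sumrN; apply: ler_sum => x _.
  by rewrite /a; case: (b x) => //; lia.
rewrite (big_setD1 v vE) /=.
set R := (\sum_(x in E :\ v) a x)%R in up lo *.
have bE : b v -> E \in H.
  move/forallP/(_ E)/implyP; apply.
  by rewrite hE vE /=; apply/forallP => x; apply/implyP => /sub.
case bv: (b v).
  rewrite bE // /a bv /=; symmetry; apply/idP; rewrite -/m; lia.
case: Hv => [dom|iso].
  have : b v.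
    apply/forallP => F; apply/implyP => /andP [/andP [/eqP FE vF] /forallP Fs].
    by apply: dom => // x xF; move: (Fs x); rewrite xF.
  by rewrite bv.
rewrite (negbTE (iso E (eqP hE) vE sub)) /a bv -/m; symmetry; apply/negbTE; lia.
Qed.

Set Implicit Arguments. Unset Strict Implicit.
Lemma sorted_before (T : eqType) (e : rel T) (s1 s2 : seq T) v :
  transitive e -> sorted e (s1 ++ v :: s2) -> forall u, u \in s1 -> e u v.
Proof.
move=> tr; elim: s1 => [|x s1 IH] //= P u.
rewrite (path_sortedE tr) in P; case/andP: P => /allP Ax P.
rewrite inE => /orP [/eqP -> |]; last by apply: IH.
by apply: Ax; rewrite mem_cat inE eqxx orbT.
Qed.

Lemma card1_eq (V : finType) (E : {set V}) v : #|E| = 1 -> v \in E -> E = [set v].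
Proof.
move/eqP/cards1P => [x ->]; by rewrite inE => /eqP ->.
Qed.

Lemma card2_eq (V : finType) (E : {set V}) v : #|E| = 2 -> v \in E ->
  exists u, u != v /\ u \in E /\ E :\ v = [set u].
Proof.
move=> c vE; have : #|E :\ v| == 1.
  by move: c; rewrite (cardsD1 v E) vE add1n => -[->].
move/cards1P => [u eu]; exists u.
have : u \in E :\ v by rewrite eu set11.
by case/setD1P => uv uE.
Qed.

Lemma part2 (V : finType) (k : nat) (H : {set {set V}}) :
     (k = 1 \/ k = 2) -> is_hypergraph k H -> separable k H -> orderable k H.
Proof.
move=> [->|->] hH [a Ha].
  exists (enum V); split; [exact: enum_uniq | by move=> v; rewrite mem_enum |].
  move=> s1 v s2 _; case: (boolP ([set v] \in H)) => vH; [left|right];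
  by move=> E E1 vE _; rewrite (card1_eq E1 vE).
pose key v : nat := ((absz (a v)).*2 + (0 <= a v)%R)%N.
pose le := fun x y => key x <= key y.
have tr : transitive le by move=> x y z; rewrite /le; apply: leq_trans.
have to : total le by move=> x y; rewrite /le; apply: leq_total.
exists (sort le (enum V)); split.
- by rewrite sort_uniq enum_uniq.
- by move=> v; rewrite mem_sort mem_enum.
move=> s1 v s2 es.
have srt : sorted le (s1 ++ v :: s2) by rewrite -es; apply: sort_sorted.
have bef := sorted_before tr srt.
have key2 : forall E : {set V}, #|E| = 2 -> v \in E -> {subset E <= rcons s1 v} ->
   exists u, key u <= key v /\ (\sum_(x in E) a x = a v + a u)%R.
  move=> E E2 vE sub; have [u [uv [uE eu]]] := card2_eq E2 vE.
  exists u; split; last by rewrite (big_setD1 v vE) eu big_set1.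
  have := sub u uE; rewrite mem_rcons inE (negbTE uv) /= => /bef; done.
subst H.
case: (boolP (0 <= a v)%R) => av; [left|right] => E E2 vE sub;
  have [u [ku se]] := key2 E E2 vE sub; rewrite inE E2 eqxx se /=.
  move: ku; rewrite /key av; case: (boolP (0 <= a u)%R) => au /=; lia.
move: ku; rewrite /key (negbTE av); case: (boolP (0 <= a u)%R) => au /=; lia.
Qed.

Lemma part3 : forall k : nat, 3 <= k ->
     exists (V : finType) (H : {set {set V}}),
       [/\ is_hypergraph k H, separable k H & ~ orderable k H].
Proof.
move=> k hk; have [n ->] : exists n, k = n.+3 by exists (k - 3); lia.
pose V := (bool * 'I_n.+3)%type.
pose a (p : V) : int := if p.1 then 1%R else (-1)%R.
pose H := [set E : {set V} | (#|E| == n.+3) && (0 <= \sum_(x in E) a x)%R].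
exists V, H; split.
- by move=> E; rewrite inE => /andP [/eqP].
- by exists a.
case=> s [Us Alls Hs].
case/lastP: s Us Alls Hs => [|s1 v] Us Alls Hs.
  by have := Alls (true, ord0).
have := Hs s1 v [::] (esym (cats1 s1 v)).
have sub : forall E : {set V}, {subset E <= rcons s1 v} by move=> E x _; apply: Alls.
pose E1 := [set (v.1, i) | i : 'I_n.+3].
pose E2 := v |: [set (~~ v.1, i) | i in [set~ (@ord0 n.+2)]].
have c1 : #|E1| = n.+3.
  by rewrite card_imset ?card_ord // => x y [].
have nin : v \notin [set (~~ v.1, i) | i in [set~ (@ord0 n.+2)]].
  apply/imsetP => -[i _ e]; have := f_equal fst e; rewrite /=; case: (v.1) => //.
have c2 : #|E2| = n.+3.
  rewrite cardsU1 nin card_imset ?cardsC1 ?card_ord //.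
  by move=> x y [].
have v1 : v \in E1 by apply/imsetP; exists v.2 => //; exact: surjective_pairing.
have v2 : v \in E2 by rewrite setU11.
have s1E : (\sum_(x in E1) a x = a v *+ n.+3)%R.
  rewrite big_imset /=; last by move=> x y _ _ [].
  by rewrite sumr_const card_ord.
have s2E : (\sum_(x in E2) a x = a v - a v *+ n.+2)%R.
  rewrite big_setU1 //= big_imset /=; last by move=> x y _ _ [].
  rewrite sumr_const cardsC1 card_ord /a /=; case: (v.1) => /=.
  - by rewrite -mulNrn.
  - rewrite ?mulNrn; lia.
case=> [dom|iso].
  have h1 := dom E1 c1 v1 (sub E1); have h2 := dom E2 c2 v2 (sub E2).
  move: h1 h2; rewrite !inE c1 c2 s1E s2E /a /= eqxx /=; case: (v.1) => /=.
  - rewrite ?mulNrn; lia.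
  - rewrite ?mulNrn; lia.
have h1 := iso E1 c1 v1 (sub E1); have h2 := iso E2 c2 v2 (sub E2).
move: h1 h2; rewrite !inE c1 c2 s1E s2E /a /= eqxx /=; case: (v.1) => /=.
- rewrite ?mulNrn; lia.
- rewrite ?mulNrn; lia.
Qed.

Theorem proposition3 :
  (forall (V : finType) (k : nat) (H : {set {set V}}),
     1 <= k -> is_hypergraph k H -> orderable k H -> separable k H) /\
  (forall (V : finType) (k : nat) (H : {set {set V}}),
     (k = 1 \/ k = 2) -> is_hypergraph k H -> separable k H -> orderable k H) /\
  (forall k : nat, 3 <= k ->
     exists (V : finType) (H : {set {set V}}),
       [/\ is_hypergraph k H, separable k H & ~ orderable k H]).
Proof.
split; first exact: part1.
split; first exact: part2.
exact: part3.
Qed.
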